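(* Assume $|\mathcal X|>2$, $\theta>0$, $u\in(0,1)$, Nakagami-$(p,q)$ fading, and let $\rho^*=\rho^*(\theta,u)$. Let $\mathsf q$ be a corner point of the interference-cloned Q cell $Q_{\mathsf x}(\rho^* )$ (a point of $\partial Q_{\mathsf x}(\rho^* )$ where two boundary arcs, belonging to the distance-ratio circles of two distinct interferers $\mathsf x',\mathsf x''$, meet), and suppose that $\mathsf x',\mathsf x''$ are the only interferers at minimal distance from $\mathsf q$. Then, with only the two nearest interferers taken into account, $\mathbb P\!\left(\frac{h_1r_1^{-\alpha}}{h_2r_2^{-\alpha}+h_3r_3^{-\alpha}}>\theta\right)=u$ at $\mathsf q$; in particular $\mathsf q\in\partial Q^{(2)}_{\mathsf x}$.
   Context: Setting: locally finite $\mathcal X\subset\mathbb{R}^2$, path loss exponent $\alpha>0$, unit powers; Nakagami-$(p,q)$ fading: serving fading $h_1\sim\mathrm{Gamma}(p,\text{rate }p)$, interferer fadings $h_2,h_3,\dots\sim\mathrm{Gamma}(q,\text{rate }q)$, all independent. $H^*=h_1/(h_2+h_3)$ with cdf $F_{H^*}$ and quantile $F_{H^*}^{-1}$; $\rho^*(\theta,u)=(\theta/F_{H^*}^{-1}(1-u))^{1/\alpha}$. Q cell: $Q_{\mathsf x}(\rho)=\{\mathsf y:\min_{\mathsf x'\in\mathcal X\setminus\{\mathsf x\}}\|\mathsf x'-\mathsf y\|>\rho\|\mathsf x-\mathsf y\|\}$; its boundary consists of arcs of the circles $\{\mathsf y:\|\mathsf x'-\mathsf y\|=\rho\|\mathsf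 x-\mathsf y\|\}$. For a location $\mathsf y$ with $\mathsf x$ as nearest point of $\mathcal X$, let $r_1=\|\mathsf x-\mathsf y\|\le r_2\le r_3$ be the three smallest distances from $\mathsf y$ to points of $\mathcal X$. Second-order Q cell: $Q^{(2)}_{\mathsf x}=\{\mathsf y:\ \mathsf x\text{ nearest to }\mathsf y,\ \mathbb P(h_1r_1^{-\alpha}/(h_2r_2^{-\alpha}+h_3r_3^{-\alpha})>\theta)>u\}$. *)

(* Defs.v *)
From HB Require Import structures.
From mathcomp Require Import all_boot all_order all_algebra.
From mathcomp Require Import all_classical all_reals all_analysis.
Set Implicit Arguments. Unset Strict Implicit. Unset Printing Implicit Defensive.
Import Order.TTheory GRing.Theory Num.Theory.
Import numFieldNormedType.Exports.
Local Open Scope classical_set_scope.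
Local Open Scope ring_scope.

Section Defs.
Variable R : realType.

Definition pt := (R * R)%type.
Definition eucl_dist (a b : pt) : R :=
  Num.sqrt ((a.1 - b.1) ^+ 2 + (a.2 - b.2) ^+ 2).

Definition tboundary (A : set pt) : set pt := closure A `\` interior A.

Definition locally_finite (X : set pt) : Prop :=
  forall (c : pt) (r : R), finite_set (X `&` [set y | eucl_dist c y <= r]).

Definition more_than_two (X : set pt) : Prop :=
  exists a b c, [/\ X a, X b, X c & [/\ a <> b, a <> c & b <> c]].

Definition min_interf_dist (X : set pt) (x y : pt) : R :=
  inf [set eucl_dist x' y | x' in X `\ x].

Definition Qcell (X : set pt) (x : pt) (rho : R) : set pt :=
  [set y | min_interf_dist X x y > rho * eucl_dist x y].

Definition ratio_circle (x x' : pt) (rho : R) : set pt :=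
  [set y | eucl_dist x' y = rho * eucl_dist x y].

(* r_2, r_3 : smallest and second smallest distances (with multiplicity)
   from y to points of X \ {x} *)
Definition r2dist (X : set pt) (x y : pt) : R :=
  inf [set t | exists z, (X `\ x) z /\ eucl_dist z y <= t].
Definition r3dist (X : set pt) (x y : pt) : R :=
  inf [set t | exists z z', [/\ (X `\ x) z, (X `\ x) z', z <> z',
                                eucl_dist z y <= t & eucl_dist z' y <= t]].

(* Gamma(k, rate k) density (normalised by its own integral, which equals
   Gamma(k) / k^k for k > 0) *)
Definition gamma_kernel (k x : R) : R :=
  if 0 < x then powR x (k - 1) * expR (- (k * x)) else 0.
Definition gamma_pdf (k x : R) : R :=
  gamma_kernel k x / fine (\int[@lebesgue_measure R]_(t in setT) (gamma_kernel k t)%:E)%E.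

Variables (d : measure_display) (T : measurableType d) (P : probability T R).

Definition has_gamma_law (k : R) (h : T -> R) : Prop :=
  measurable_fun setT h /\
  forall A : set R, measurable A ->
    P (h @^-1` A) = (\int[@lebesgue_measure R]_(x in A) (gamma_pdf k x)%:E)%E.

Definition indep3 (h1 h2 h3 : T -> R) : Prop :=
  forall A B C : set R, measurable A -> measurable B -> measurable C ->
    P (h1 @^-1` A `&` h2 @^-1` B `&` h3 @^-1` C) =
    (P (h1 @^-1` A) * P (h2 @^-1` B) * P (h3 @^-1` C))%E.

Definition cdf_Hstar (h1 h2 h3 : T -> R) (t : R) : R :=
  fine (P [set w | h1 w / (h2 w + h3 w) <= t]).
Definition quantile_Hstar (h1 h2 h3 : T -> R) (v : R) : R :=
  inf [set t | v <= cdf_Hstar h1 h2 h3 t].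

Definition rho_star (h1 h2 h3 : T -> R) (alpha theta u : R) : R :=
  powR (theta / quantile_Hstar h1 h2 h3 (1 - u)) (alpha^-1).

Definition succ_prob2 (h1 h2 h3 : T -> R) (alpha theta : R)
    (X : set pt) (x y : pt) : \bar R :=
  P [set w | theta < h1 w * powR (eucl_dist x y) (- alpha) /
       (h2 w * powR (r2dist X x y) (- alpha) + h3 w * powR (r3dist X x y) (- alpha))].

End Defs.

(* Main.v *)
Require Import Defs.
From HB Require Import structures.
From mathcomp Require Import all_boot all_order all_algebra.
From mathcomp Require Import all_classical all_reals all_analysis.
From mathcomp Require Import lra ring zify measurable_realfun.
Import Order.TTheory GRing.Theory Num.Theory.
Import numFieldNormedType.Exports.
Import Num.Def.
Local Open Scope classical_set_scope.
Local Open Scope ring_scope.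
Set Implicit Arguments. Unset Strict Implicit.

Section Prob.
Context (R : realType) (d : measure_display) (T : measurableType d)
  (P : probability T R).

Lemma mpre (h : T -> R) (A : set R) : measurable_fun setT h -> measurable A ->
  measurable (h @^-1` A).
Proof. by move=> mh mA; rewrite -[_ @^-1` _]setTI; exact: mh measurableT _ mA. Qed.

Lemma gamma_le0 k h : has_gamma_law P k h -> P (h @^-1` `]-oo, 0]) = 0%E.
Proof.
move=> [mh hl]; rewrite hl//; apply: integral0_eq => x /=.
rewrite in_itv /= => x0.
by rewrite /gamma_pdf /gamma_kernel ltNge x0 /= mul0r.
Qed.

Lemma gamma_set1 k h a : has_gamma_law P k h -> P (h @^-1` [set a]) = 0%E.
Proof.
by move=> [mh hl]; rewrite hl// integral_set1.
Qed.

Lemma tail_small (h : T -> R) : measurable_fun setT h -> forall e : R, 0 < e ->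
  exists M : R, (P (h @^-1` `[M, +oo[) < e%:E)%E.
Proof.
move=> mh e e0.
pose F n := h @^-1` `[n%:R, +oo[.
have cv : (P \o F) @ \oo --> P (\bigcap_n F n).
  apply: nonincreasing_cvg_mu.
  - by rewrite (le_lt_trans (probability_le1 _ _)) ?ltry//; apply: mpre.
  - by move=> i; apply: mpre.
  - by apply: bigcapT_measurable => i; apply: mpre.
  - move=> m n mn; apply/subsetPset => x /=; rewrite /F /= !in_itv /= !andbT.
    by apply: le_trans; rewrite ler_nat.
have E0 : \bigcap_n F n = set0.
  rewrite -subset0 => x /(_ (truncn (h x)).+1 I); rewrite /F /= in_itv /= andbT.
  by rewrite leNgt truncnS_gt.
rewrite E0 measure0 in cv.
have e0' : (0 < e%:E)%E by rewrite lte_fin.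
have := cv _ (open_ereal_lt' e0').
move=> [N _ HN]; exists N%:R; exact: (HN N (leqnn N)).
Qed.


Lemma unif_small k h : has_gamma_law P k h -> forall e : R, 0 < e ->
  exists n : nat, forall s : R, (P (h @^-1` `[s, (s + n.+1%:R^-1)%R]) <= e%:E)%E.
Proof.
move=> hg e e0; have [mh _] := hg.
case: (pselect (exists n : nat, forall s : R,
  (P (h @^-1` `[s, (s + n.+1%:R^-1)%R]) <= e%:E)%E)) => // nH; exfalso.
have Hs : forall n : nat, exists s : R,
    (e%:E < P (h @^-1` `[s, (s + n.+1%:R^-1)%R]))%E.
  move=> n; apply: contrapT => ns; apply: nH; exists n => s.
  rewrite leNgt; apply/negP => hs; apply: ns; exists s; exact hs.
have [s Hs'] := choice Hs.
have [M HM] := tail_small mh e0.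
have e0' : (0 < e%:E)%E by rewrite lte_fin.
have bnd n : -1 <= s n <= M.
  apply/andP; split.
  - rewrite leNgt; apply/negP => sn.
    have : (P (h @^-1` `[s n, (s n + n.+1%:R^-1)%R]) <= 0)%E.
      rewrite -(gamma_le0 hg); apply: le_measure; rewrite ?inE; try apply: mpre => //.
      move=> x /=; rewrite !in_itv /= => /andP[_ hx]; apply: (le_trans hx).
      have : n.+1%:R^-1 <= 1 :> R by rewrite invf_le1 // ler1n.
      move=> ha; set a := n.+1%:R^-1 in hx ha *; lra.
    by move/(lt_le_trans (Hs' n)); rewrite ltNge (ltW e0').
  - rewrite leNgt; apply/negP => sn.
    have : (P (h @^-1` `[s n, (s n + n.+1%:R^-1)%R]) <= P (h @^-1` `[M, +oo[))%E.
      apply: le_measure; rewrite ?inE; try apply: mpre => //.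
      move=> x /=; rewrite !in_itv /= andbT => /andP[hx _]; apply: le_trans hx.
      exact: ltW.
    move=> H1; have := lt_trans (lt_le_trans (Hs' n) H1) HM; by rewrite ltxx.
have bs : bounded_fun s.
  rewrite /bounded_fun /= /bounded_near.
  near=> N => x _ /=.
  have /andP[b1 b2] := bnd x.
  have h3 : 1 + `|M| <= N by near: N; apply: nbhs_pinfty_ge; exact: num_real.
  have h4 := ler_norm M; have h5 := normr_ge0 M.
  rewrite ler_norml; apply/andP; split; lra.
have [f finc cvf] := bolzano_weierstrass bs.
set l := lim ((s \o f) @ \oo) in cvf.
have fk j : (j <= f j)%N.
  move/increasing_seqP: finc => fi.
  elim: j => [//|j IH]; exact: leq_ltn_trans IH (fi j).
have key m : (e%:E <= P (h @^-1` `[(l - m.+1%:R^-1)%R, (l + m.+1%:R^-1)%R]))%E.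
  set r := m.+1%:R^-1.
  have r0 : 0 < r by rewrite invr_gt0.
  have r2 : 0 < r / 2 by rewrite divr_gt0.
  move/cvgrPdist_lt: cvf => /(_ _ r2) cv.
  have big := nbhs_infty_ge (2 * m.+1)%N.
  have [j [/= cj bj]] := filter_ex (filterI cv big).
  apply: (le_trans (ltW (Hs' (f j)))).
  apply: le_measure; rewrite ?inE; try apply: mpre => //.
  have hf : (f j).+1%:R^-1 <= r / 2.
    rewrite /r -invfM lef_pV2 ?posrE ?mulr_gt0 //.
    rewrite -natrM ler_nat; have := fk j; lia.
  move: cj; rewrite /= distrC => cj.
  have n1 := ler_norm (s (f j) - l); have n2 := ler_norm (- (s (f j) - l)).
  rewrite normrN in n2.
  move=> x /=; rewrite !in_itv /= => /andP[hy1 hy2]; apply/andP.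
  move: hf hy2; set a := (f j).+1%:R^-1 => hf hy2.
  split; lra.
pose G m := h @^-1` `[(l - m.+1%:R^-1)%R, (l + m.+1%:R^-1)%R].
have cv2 : (P \o G) @ \oo --> P (\bigcap_m G m).
  apply: nonincreasing_cvg_mu.
  - by rewrite (le_lt_trans (probability_le1 _ _)) ?ltry//; apply: mpre.
  - by move=> i; apply: mpre.
  - by apply: bigcapT_measurable => i; apply: mpre.
  - move=> m n mn; apply/subsetPset => x /=; rewrite /G /= !in_itv /=.
    have : n.+1%:R^-1 <= m.+1%:R^-1 :> R by rewrite lef_pV2 ?posrE // ler_nat.
    move=> hmn /andP[a b]; apply/andP.
    move: hmn a b; set u := n.+1%:R^-1; set v := m.+1%:R^-1 => hmn a b.
    split; lra.
have E1 : \bigcap_m G m = h @^-1` [set l].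
  apply/seteqP; split => x /=; last first.
    move=> hxl m _; rewrite /G /= in_itv /= hxl; apply/andP; split.
    - by rewrite lerBlDr lerDl invr_ge0.
    - by rewrite lerDl invr_ge0.
  move=> Hx; apply/eqP; rewrite -subr_eq0 -normr_eq0; apply/eqP.
  apply/eqP; rewrite eq_le normr_ge0 andbT; rewrite leNgt; apply/negP => t0.
  set t := `|h x - l| in t0.
  have := Hx (truncn t^-1) I; rewrite /G /= in_itv /= => /andP[a b].
  have tt := truncnS_gt t^-1.
  have tk : (truncn t^-1).+1%:R^-1 < t.
    by rewrite -[X in _ < X](invrK t) ltf_pV2 ?posrE ?invr_gt0 ?ltr0n.
  move: tk a b; set a := (truncn t^-1).+1%:R^-1 => tk a' b'.
  have : t <= a by rewrite /t ler_norml; apply/andP; split; lra.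
  lra.
rewrite E1 (gamma_set1 _ hg) in cv2.
have : (e%:E <= 0)%E.
  apply: (cvge_to_ge cv2); near=> m; exact: key.
by rewrite leNgt e0'.
Unshelve. all: by end_near.
Qed.


Lemma measurable_inv : measurable_fun [set: R] (@GRing.inv R).
Proof.
have -> : [set: R] = [set x | x != 0] `|` [set 0].
  apply/seteqP; split => x // _ /=; case: (eqVneq x 0) => hx; [right|left] => //.
apply/measurable_funU.
- apply: open_measurable. exact: open_neq.
- exact: measurable_set1.
split; last exact: measurable_fun_set1.
apply: open_continuous_measurable_fun; first exact: open_neq.
by move=> x; rewrite inE => /inv_continuous.
Qed.

Section Atom.
Variables (h1 h2 h3 : T -> R) (p q : R).
Hypotheses (g1 : has_gamma_law P p h1) (g2 : has_gamma_law P q h2)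
  (g3 : has_gamma_law P q h3) (ind : indep3 P h1 h2 h3).

Let m1 : measurable_fun setT h1. Proof. by case: g1. Qed.
Let m2 : measurable_fun setT h2. Proof. by case: g2. Qed.
Let m3 : measurable_fun setT h3. Proof. by case: g3. Qed.

Lemma mH : measurable_fun setT (fun w => h1 w / (h2 w + h3 w)).
Proof.
apply: measurable_funM => //.
apply: (measurableT_comp measurable_inv); exact: measurable_funD.
Qed.

Lemma prod3 A B C : measurable A -> measurable B -> measurable C ->
  P (h1 @^-1` A `&` h2 @^-1` B `&` h3 @^-1` C) =
  (P (h1 @^-1` A) * P (h2 @^-1` B `&` h3 @^-1` C))%E.
Proof.
move=> mA mB mC; rewrite ind //.
have := ind measurableT mB mC; rewrite preimage_setT !setTI probability_setT mul1e.
by move=> ->; rewrite muleA.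
Qed.

Lemma atom0 c : 0 < c -> P [set w | h1 w / (h2 w + h3 w) = c] = 0%E.
Proof.
move=> c0.
apply/eqP; rewrite eq_le measure_ge0 andbT.
apply/lee_addgt0Pr => e e0; rewrite add0e.
have [n Hn] := unif_small g1 e0.
set eta : R := n.+1%:R^-1.
have eta0 : 0 < eta by rewrite invr_gt0.
set del : R := eta / (2 * c).
have del0 : 0 < del by rewrite divr_gt0 // mulr_gt0.
have etadel : eta = c * del + c * del by rewrite /del; field; rewrite gt_eqF.
pose A (i : nat) : set R := [set` `[i%:R * del, i.+1%:R * del[].
pose I (k : nat) : set R := [set` `[c * (k%:R * del), c * (k%:R * del) + eta]].
pose G i j := h2 @^-1` A i `&` h3 @^-1` A j.
pose E i j := h1 @^-1` I (i + j)%N `&` h2 @^-1` A i `&` h3 @^-1` A j.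
pose B i := \bigcup_j E i j.
pose N2 := h2 @^-1` `]-oo, 0]; pose N3 := h3 @^-1` `]-oo, 0].
pose Hc := [set w | h1 w / (h2 w + h3 w) = c].
pose Y := Hc `\` (N2 `|` N3).
have mA i : measurable (A i) by exact: measurable_itv.
have mI k : measurable (I k) by exact: measurable_itv.
have mG i j : measurable (G i j) by apply: measurableI; apply: mpre.
have mE i j : measurable (E i j).
  by apply: measurableI; [apply: measurableI|]; apply: mpre.
have mB i : measurable (B i) by apply: bigcupT_measurable.
have mN2 : measurable N2 by apply: mpre.
have mN3 : measurable N3 by apply: mpre.
have mHc : measurable Hc by exact: (mpre mH (measurable_set1 c)).
have mY : measurable Y by apply: measurableD => //; exact: measurableU.
have Adisj i j x : A i x -> A j x -> i = j.
  rewrite /A /= !in_itv /= => /andP[a b] /andP[a' b'].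
  have : (i < j.+1)%N.
    by rewrite -(ltr_nat R) -(ltr_pM2r del0); apply: le_lt_trans a b'.
  have : (j < i.+1)%N.
    by rewrite -(ltr_nat R) -(ltr_pM2r del0); apply: le_lt_trans a' b.
  lia.
have cover : Y `<=` \bigcup_i B i.
  move=> w [Hw Nw].
  have h2p : 0 < h2 w.
    by rewrite ltNge; apply/negP => hw; apply: Nw; left; rewrite /N2 /= in_itv.
  have h3p : 0 < h3 w.
    by rewrite ltNge; apply/negP => hw; apply: Nw; right; rewrite /N3 /= in_itv.
  have Sp : 0 < h2 w + h3 w by rewrite addr_gt0.
  have eh1 : h1 w = c * (h2 w + h3 w).
    by move: Hw; rewrite /Hc /= => <-; rewrite mulrVK // unitfE gt_eqF.
  set i := truncn (h2 w / del); set j := truncn (h3 w / del).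
  have [ti1 ti2] : i%:R * del <= h2 w /\ h2 w < i%:R * del + del.
    have /andP[a b] := truncn_itv (ltW (divr_gt0 h2p del0)).
    rewrite -/i ler_pdivlMr // ltr_pdivrMr // mulrSr mulrDl mul1r in a b.
    by [].
  have [tj1 tj2] : j%:R * del <= h3 w /\ h3 w < j%:R * del + del.
    have /andP[a b] := truncn_itv (ltW (divr_gt0 h3p del0)).
    rewrite -/j ler_pdivlMr // ltr_pdivrMr // mulrSr mulrDl mul1r in a b.
    by [].
  exists i => //; exists j => //.
  rewrite /E /=; split; [split|].
  - rewrite /I /= in_itv /= natrD mulrDl; apply/andP; split.
    + by rewrite eh1; apply: ler_wpM2l; [exact: ltW|exact: lerD].
    + rewrite eh1 etadel.
      set X := i%:R * del in ti1 ti2 *; set Z := j%:R * del in tj1 tj2 *.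
      nra.
  - by rewrite /A /= in_itv /= ti1 /= mulrSr mulrDl mul1r.
  - by rewrite /A /= in_itv /= tj1 /= mulrSr mulrDl mul1r.
have PE i j : (P (E i j) <= e%:E * P (G i j))%E.
  rewrite /E prod3 //; apply: lee_wpmul2r => //.
  exact: Hn.
have PB i : (P (B i) <= e%:E * P (h2 @^-1` A i))%E.
  apply: (le_trans (measure_sigma_subadditive P (mE i) (mB i) (fun x Bx => Bx))).
  apply: le_trans.
    by apply: (@lee_nneseries _ (fun j => P (E i j)) (fun j => (e%:E * P (G i j))%E) xpredT 0%N) => // j _; exact: PE.
  rewrite nneseriesZl //; apply: lee_wpmul2l; first by rewrite lee_fin ltW.
  rewrite -measure_semi_bigcup //; last first.
    by apply: bigcupT_measurable.
    move=> j k _ _ [x [[_ aj] [_ ak]]]; exact: Adisj aj ak.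
  apply: le_measure; rewrite ?inE //; last by move=> x [j _ []].
  by apply: bigcupT_measurable.
  exact: mpre.
have PY : (P Y <= e%:E)%E.
  apply: (le_trans (measure_sigma_subadditive P mB mY cover)).
  apply: le_trans.
    by apply: (@lee_nneseries _ (fun i => P (B i)) (fun i => (e%:E * P (h2 @^-1` A i))%E) xpredT 0%N) => // i _; exact: PB.
  rewrite nneseriesZl // -measure_semi_bigcup //; last first.
  - by apply: bigcupT_measurable => i; apply: mpre.
  - move=> j k _ _ [x [aj ak]]; exact: Adisj aj ak.
  - by move=> i; apply: mpre.
  rewrite -[leRHS]mule1; apply: lee_wpmul2l; first by rewrite lee_fin ltW.
  by apply: probability_le1; apply: bigcupT_measurable => i; apply: mpre.
have : (P Hc <= P N2 + P N3 + P Y)%E.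
  have sub : Hc `<=` (N2 `|` N3) `|` Y.
    by move=> w Hw; case: (pselect ((N2 `|` N3) w)) => h; [left|right].
  have mU : measurable (N2 `|` N3) by exact: measurableU.
  have := @le_measure _ _ _ P Hc ((N2 `|` N3) `|` Y).
  rewrite !inE => /(_ mHc (measurableU _ _ mU mY) sub) H1.
  apply: (le_trans H1).
  apply: (le_trans (measureU2 P mU mY)).
  by rewrite leeD2r // measureU2.
rewrite /N2 /N3 (gamma_le0 g2) (gamma_le0 g3) !add0e => H.
exact: le_trans H PY.
Qed.


Lemma quantile_prop u : 0 < u < 1 ->
  0 < quantile_Hstar P h1 h2 h3 (1 - u) /\
  P [set w | quantile_Hstar P h1 h2 h3 (1 - u) < h1 w / (h2 w + h3 w)] = u%:E.
Proof.
move=> /andP[u0 u1].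
set v := 1 - u.
have v0 : 0 < v by rewrite /v subr_gt0.
have v1 : v < 1 by rewrite /v ltrBlDr ltrDl.
pose H w := h1 w / (h2 w + h3 w).
pose L t := [set w | H w <= t].
have mL t : measurable (L t).
  have -> : L t = H @^-1` `]-oo, t] by apply/seteqP; split => w /=; rewrite in_itv.
  exact: (mpre mH (measurable_itv _)).
have PLfin t : P (L t) = (fine (P (L t)))%:E by rewrite fineK // fin_num_measure.
have FE t : (v <= cdf_Hstar P h1 h2 h3 t) <-> (v%:E <= P (L t))%E.
  by rewrite /cdf_Hstar [in X in _ <-> X]PLfin lee_fin.
have Lmono s t : s <= t -> (P (L s) <= P (L t))%E.
  move=> st; apply: le_measure; rewrite ?inE //.
  by move=> w /= hw; apply: le_trans hw st.
have L0 : P (L 0) = 0%E.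
  pose N1 := h1 @^-1` `]-oo, 0]; pose N2 := h2 @^-1` `]-oo, 0];
    pose N3 := h3 @^-1` `]-oo, 0].
  have mN1 : measurable N1 by apply: mpre.
  have mN2 : measurable N2 by apply: mpre.
  have mN3 : measurable N3 by apply: mpre.
  have sub : L 0 `<=` (N1 `|` N2) `|` N3.
    move=> w; rewrite /L /H /N1 /N2 /N3 /= !in_itv /= => Hw.
    case: (leP (h1 w) 0) => a; first by left; left.
    case: (leP (h2 w) 0) => b; first by left; right.
    case: (leP (h3 w) 0) => c; first by right.
    exfalso; move: Hw; rewrite leNgt => /negP; apply.
    by rewrite divr_gt0 // addr_gt0.
  apply/eqP; rewrite eq_le measure_ge0 andbT.
  have := @le_measure _ _ _ P (L 0) ((N1 `|` N2) `|` N3).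
  rewrite !inE => /(_ (mL 0) (measurableU _ _ (measurableU _ _ mN1 mN2) mN3) sub) H1.
  apply: (le_trans H1); apply: (le_trans (measureU2 P (measurableU _ _ mN1 mN2) mN3)).
  apply: (le_trans (leeD2r _ (measureU2 P mN1 mN2))).
  have P1 : P N1 = 0%E by exact: gamma_le0 g1.
  have P2 : P N2 = 0%E by exact: gamma_le0 g2.
  have P3 : P N3 = 0%E by exact: gamma_le0 g3.
  have Z : (P N1 + P N2 + P N3 <= 0)%E by rewrite P1 P2 P3 !adde0.
  exact: Z.
pose Qs := [set t | v <= cdf_Hstar P h1 h2 h3 t].
have Qne : Qs !=set0.
  pose F n := L n%:R.
  have cv : (P \o F) @ \oo --> P (\bigcup_n F n).
    apply: nondecreasing_cvg_mu.
    - by move=> n; apply: mL.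
    - by apply: bigcupT_measurable => n; apply: mL.
    - move=> m n mn; apply/subsetPset => w /= hw; apply: le_trans hw _.
      by rewrite ler_nat.
  have E1 : \bigcup_n F n = setT.
    apply/seteqP; split => // w _; exists (truncn `|H w|).+1 => //.
    rewrite /F /L /=; apply: le_trans (ler_norm _) (ltW (truncnS_gt _)).
  rewrite E1 probability_setT in cv.
  have v1' : (v%:E < 1)%E by rewrite lte_fin.
  have [N _ HN] := cv _ (open_ereal_gt' v1').
  by exists N%:R; apply/FE; apply: ltW; exact: (HN N (leqnn N)).
have Qlb t : Qs t -> 0 < t.
  move=> /FE Ht; rewrite ltNge; apply/negP => t0.
  have := le_trans Ht (Lmono _ _ t0); rewrite L0 lee_fin leNgt v0 //.
have hinf : has_inf Qs.
  split => //; exists 0 => t /Qlb /ltW //.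
set Q := quantile_Hstar P h1 h2 h3 v.
have QE : Q = inf Qs by [].
have Q0 : 0 <= Q by rewrite QE; apply: lb_le_inf => // t /Qlb /ltW.
pose Lt := [set w | H w < Q].
have PQge : (v%:E <= P (L Q))%E.
  pose G n := L (Q + n.+1%:R^-1).
  have cv : (P \o G) @ \oo --> P (\bigcap_n G n).
    apply: nonincreasing_cvg_mu.
    - by rewrite (le_lt_trans (probability_le1 _ (mL _))) ?ltry.
    - by move=> n; apply: mL.
    - by apply: bigcapT_measurable => n; apply: mL.
    - move=> m n mn; apply/subsetPset => w /= hw; apply: le_trans hw _.
      by rewrite lerD2l lef_pV2 ?posrE // ler_nat.
  have E1 : \bigcap_n G n = L Q.
    apply/seteqP; split => w /=; last first.
      move=> hw n _; rewrite /G /L /=; apply: le_trans hw _.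
      by rewrite lerDl invr_ge0.
    move=> Hw; rewrite /L /=; rewrite leNgt; apply/negP => t0.
    set t := H w - Q.
    have tp : 0 < t by rewrite subr_gt0.
    have := Hw (truncn t^-1) I; rewrite /G /L /=.
    have tk : (truncn t^-1).+1%:R^-1 < t.
      by rewrite -[X in _ < X](invrK t) ltf_pV2 ?posrE ?invr_gt0 ?ltr0n ?truncnS_gt.
    move: tk; set a := (truncn t^-1).+1%:R^-1 => tk.
    rewrite /t in tk; lra.
  rewrite E1 in cv; apply: (cvge_to_ge cv); near=> n.
  have hlt : inf Qs < Q + n.+1%:R^-1 by rewrite -QE ltrDl invr_gt0.
  have [y Qy yQ] := inf_lt Qne hlt.
  move/FE: Qy => Qy; apply: le_trans Qy _; apply: Lmono; apply: ltW.
  exact: yQ.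
have PQlt : (P Lt <= v%:E)%E.
  pose K n := L (Q - n.+1%:R^-1).
  have mlt : measurable [set w | H w < Q].
    have -> : [set w | H w < Q] = H @^-1` `]-oo, Q[ by apply/seteqP; split => w /=; rewrite in_itv.
    exact: (mpre mH (measurable_itv _)).
  have cv : (P \o K) @ \oo --> P (\bigcup_n K n).
    apply: nondecreasing_cvg_mu.
    - by move=> n; apply: mL.
    - by apply: bigcupT_measurable => n; apply: mL.
    - move=> m n mn; apply/subsetPset => w /= hw; apply: le_trans hw _.
      by rewrite lerD2l lerN2 lef_pV2 ?posrE // ler_nat.
  have E1 : \bigcup_n K n = [set w | H w < Q].
    apply/seteqP; split => w /=.
      move=> [n _]; rewrite /K /L /= => hw; apply: le_lt_trans hw _.
      by rewrite ltrBlDr ltrDl invr_gt0.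
    move=> hw; set t := Q - H w.
    have tp : 0 < t by rewrite subr_gt0.
    exists (truncn t^-1) => //; rewrite /K /L /=.
    have tk : (truncn t^-1).+1%:R^-1 < t.
      by rewrite -[X in _ < X](invrK t) ltf_pV2 ?posrE ?invr_gt0 ?ltr0n ?truncnS_gt.
    move: tk; set a := (truncn t^-1).+1%:R^-1 => tk.
    rewrite /t in tk; lra.
  rewrite E1 in cv; apply: (cvge_to_le cv); near=> n.
  rewrite /K /=; apply: ltW; rewrite ltNge; apply/negP => /FE hq.
  have hh : Q <= Q - n.+1%:R^-1 by by case: hinf => _ hlb; exact: (ge_inf hlb hq).
  have : 0 < n.+1%:R^-1 :> R by rewrite invr_gt0.
  move: hh; set a := n.+1%:R^-1 => hh ha; lra.
have Qpos : 0 < Q.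
  rewrite lt_neqAle Q0 andbT; apply/negP => /eqP Q0'.
  by move: PQge; rewrite -Q0' L0 lee_fin leNgt v0.
have PQ : P (L Q) = v%:E.
  apply/eqP; rewrite eq_le PQge andbT.
  have sub : L Q `<=` [set w | H w < Q] `|` [set w | H w = Q].
    move=> w; rewrite /L /= le_eqVlt => /orP[/eqP->|->]; [right|left] => //.
  have mlt : measurable [set w | H w < Q].
    have -> : [set w | H w < Q] = H @^-1` `]-oo, Q[ by apply/seteqP; split => w /=; rewrite in_itv.
    exact: (mpre mH (measurable_itv _)).
  have meq : measurable [set w | H w = Q] by exact: (mpre mH (measurable_set1 Q)).
  have := @le_measure _ _ _ P (L Q) ([set w | H w < Q] `|` [set w | H w = Q]).
  rewrite !inE => /(_ (mL Q) (measurableU _ _ mlt meq) sub) H1.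
  apply: (le_trans H1); apply: (le_trans (measureU2 P mlt meq)).
  have A0 : P [set w | H w = Q] = 0%E by exact: atom0 Qpos.
  have Z : (P Lt + P [set w | H w = Q] <= v%:E)%E by rewrite A0 adde0.
  exact: Z.
split => //.
have -> : [set w | Q < h1 w / (h2 w + h3 w)] = ~` L Q.
  by apply/seteqP; split => w /=; rewrite ltNge => /negP.
rewrite probability_setC // PQ /v -EFinB; congr (_%:E); ring.
Unshelve. all: by end_near.
Qed.

End Atom.

End Prob.

Section Geom.
Context (R : realType).

Lemma dist_ge0 (a b : pt R) : 0 <= eucl_dist a b.
Proof. exact: sqrtr_ge0. Qed.

Lemma dist0 (a b : pt R) : eucl_dist a b = 0 -> a = b.
Proof.
move: a b => [a1 a2] [b1 b2]; rewrite /eucl_dist /= => /eqP; rewrite sqrtr_eq0 => h.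
have s1 := sqr_ge0 (a1 - b1); have s2 := sqr_ge0 (a2 - b2).
have e1 : (a1 - b1) ^+ 2 = 0 by apply/eqP; rewrite eq_le s1 andbT; lra.
have e2 : (a2 - b2) ^+ 2 = 0 by apply/eqP; rewrite eq_le s2 andbT; lra.
move/eqP: e1; rewrite sqrf_eq0 subr_eq0 => /eqP ->.
by move/eqP: e2; rewrite sqrf_eq0 subr_eq0 => /eqP ->.
Qed.

Lemma inf_min (S : set R) m : S m -> (forall t, S t -> m <= t) -> inf S = m.
Proof.
move=> Sm lb.
have hl : has_lbound S by exists m.
have h1 : inf S <= m := ge_inf hl Sm.
have h2 : m <= inf S by apply: lb_le_inf; [exists m|].
lra.
Qed.

End Geom.

Theorem lemma6 (R : realType) (d : measure_display) (T : measurableType d)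
  (P : probability T R) (h1 h2 h3 : T -> R) (p q : R)
  (X : set (pt R)) (alpha theta u : R) (x x' x'' qpt : pt R) (rho : R) :
  0 < p -> 0 < q ->
  has_gamma_law P p h1 -> has_gamma_law P q h2 -> has_gamma_law P q h3 ->
  indep3 P h1 h2 h3 ->
  locally_finite X -> more_than_two X -> 0 < alpha ->
  0 < theta -> 0 < u < 1 ->
  X x ->
  rho = rho_star P h1 h2 h3 alpha theta u ->
  (* q is a corner point of Q_x(rho_star): two boundary arcs, on the ratio circles
     of the distinct interferers x' and x'', meet at q *)
  (X `\ x) x' -> (X `\ x) x'' -> x' <> x'' ->
  tboundary (Qcell X x rho) qpt ->
  ratio_circle x x' rho qpt -> ratio_circle x x'' rho qpt ->
  closure ((tboundary (Qcell X x rho) `&` ratio_circle x x' rho) `\ qpt) qpt ->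
  closure ((tboundary (Qcell X x rho) `&` ratio_circle x x'' rho) `\ qpt) qpt ->
  (* x' and x'' are the only interferers at minimal distance from q *)
  eucl_dist x' qpt = min_interf_dist X x qpt ->
  eucl_dist x'' qpt = min_interf_dist X x qpt ->
  (forall z, (X `\ x) z -> z <> x' -> z <> x'' ->
     min_interf_dist X x qpt < eucl_dist z qpt) ->
  succ_prob2 P h1 h2 h3 alpha theta X x qpt = u%:E.
Proof.
move=> p0 q0 g1 g2 g3 ind _ _ a0 th0 hu Xx rhoE Xx' Xx'' neq _ rc1 rc2 _ _ d1 d2 _.
have [Qpos HQ] := quantile_prop g1 g2 g3 ind hu.
set Q := quantile_Hstar P h1 h2 h3 (1 - u) in Qpos HQ.
have rho0 : 0 < rho by rewrite rhoE /rho_star powR_gt0 // divr_gt0.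
set m := min_interf_dist X x qpt in d1 d2.
have hlb : has_lbound [set eucl_dist x0 qpt | x0 in X `\ x].
  by exists 0 => _ [z _ <-]; exact: dist_ge0.
have mle z : (X `\ x) z -> m <= eucl_dist z qpt.
  by move=> Xz; apply: (ge_inf hlb); exists z.
have r2E : r2dist X x qpt = m.
  apply: inf_min; first by exists x'; split => //; rewrite d1.
  by move=> t [z [Xz hz]]; apply: le_trans (mle z Xz) hz.
have r3E : r3dist X x qpt = m.
  apply: inf_min; first by exists x', x''; split => //; rewrite ?d1 ?d2.
  by move=> t [z [z' [Xz _ _ hz _]]]; apply: le_trans (mle z Xz) hz.
move: rc1; rewrite /ratio_circle /= => rc1.
set r1 := eucl_dist x qpt in rc1 *.
have r1pos : 0 < r1.
  rewrite lt_neqAle dist_ge0 andbT; apply/eqP => e0.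
  move: rc1; rewrite -e0 mulr0 => /dist0 e1.
  move: Xx'; rewrite /= => [[_]]; apply.
  by rewrite e1; apply/esym/dist0; rewrite -/r1 -e0.
have mE : m = rho * r1 by rewrite -d1 rc1.
rewrite /succ_prob2 r2E r3E mE -HQ -/r1.
congr (P _); apply/funext => w; apply/propext.
set a := powR r1 (- alpha); set b := powR rho (- alpha).
have bE : b^-1 = theta / Q.
  rewrite /b powRN invrK rhoE /rho_star -powRrM mulVf ?gt_eqF // powRr1 //.
  by rewrite ltW // divr_gt0.
have anz : a != 0 by rewrite gt_eqF // powR_gt0.
have key : h1 w * a / (h2 w * (b * a) + h3 w * (b * a)) =
    h1 w / (h2 w + h3 w) * (theta / Q).
  rewrite -mulrDl !invfM -bE.
  set iS := (h2 w + h3 w)^-1; set ib := b^-1; set ia := a^-1.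
  have aa : a * ia = 1 by rewrite /ia mulfV.
  transitivity (h1 w * iS * ib * (a * ia)); first by ring.
  by rewrite aa mulr1.
rewrite /= powRM ?ltW // -/a -/b key.
set Hw := h1 w / (h2 w + h3 w).
rewrite mulrCA ltr_pMr // ltr_pdivlMr // mul1r.
by split.
Qed.
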